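(* Let $n\ge 3$ and let $C\in\mathbb{R}^{n\times n}$ be nonnegative, doubly stochastic, irreducible, with zero diagonal entries. Consider the map $F(x)=C^\top x+\mathrm{diag}(x)x-C^\top\mathrm{diag}(x)x$ on the simplex $\Delta$. Then the set of points $x\in\Delta$ with $F(x)=x$ is exactly $\{e_1,\dots,e_n,\tfrac{1}{n}\mathbf{1}\}$; in particular, $\tfrac1n\mathbf 1$ is the unique equilibrium of the Modified DeGroot-Friedkin model $x(s+1)=F(x(s))$ in $\Delta$ other than $e_1,\dots,e_n$.
   Context: $\Delta=\{x\in\mathbb{R}^n: x\ge 0,\ \sum_i x_i=1\}$; $e_i$ is the $i$th standard basis vector; $\mathbf 1$ is the all-ones vector. Doubly stochastic means nonnegative with all row sums and all column sums equal to $1$. *)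

(* Defs.v *)
From HB Require Import structures.
From mathcomp Require Import all_boot all_order all_algebra.
Set Implicit Arguments. Unset Strict Implicit. Unset Printing Implicit Defensive.
Import Order.TTheory GRing.Theory Num.Theory.
Local Open Scope ring_scope.

Definition in_simplex (R : realFieldType) (n : nat) (x : 'cV[R]_n) : Prop :=
  (forall i, 0 <= x i 0) /\ \sum_i x i 0 = 1.

Definition nonneg_mx (R : realFieldType) (n : nat) (C : 'M[R]_n) : Prop :=
  forall i j, 0 <= C i j.

Definition doubly_stochastic (R : realFieldType) (n : nat) (C : 'M[R]_n) : Prop :=
  nonneg_mx C /\ (forall i, \sum_j C i j = 1) /\ (forall j, \sum_i C i j = 1).

(* Irreducible (nonnegative) matrix: its associated digraph, with an edge
   i -> j iff C i j != 0, is strongly connected. *)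
Definition irreducible_mx (R : realFieldType) (n : nat) (C : 'M[R]_n) : Prop :=
  forall i j : 'I_n, connect (fun a b => C a b != 0) i j.

Definition zero_diag (R : realFieldType) (n : nat) (C : 'M[R]_n) : Prop :=
  forall i, C i i = 0.

Definition mDF_map (R : realFieldType) (n : nat) (C : 'M[R]_n) (x : 'cV[R]_n)
  : 'cV[R]_n :=
  C^T *m x + diag_mx x^T *m x - C^T *m (diag_mx x^T *m x).

Definition basis_vec (R : realFieldType) (n : nat) (i : 'I_n) : 'cV[R]_n :=
  delta_mx i 0.

(* Main.v *)
Require Import Defs.
From HB Require Import structures.
From mathcomp Require Import all_boot all_order all_algebra lra zify.
Import Order.TTheory GRing.Theory Num.Theory.
Local Open Scope ring_scope.

Lemma exmax (R : realDomainType) (I : finType) (i0 : I) (y : I -> R) :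
  exists m, forall j, y j <= y m.
Proof.
case: (@arg_maxP _ _ _ i0 xpredT y isT) => m _ H.
by exists m => j; apply: H.
Qed.

Lemma mDF_E (R : realFieldType) n (C : 'M[R]_n) x k :
  mDF_map C x k 0 = \sum_j C j k * x j 0 + x k 0 * x k 0
                    - \sum_j C j k * (x j 0 * x j 0).
Proof.
rewrite /mDF_map mul_diag_mx !mxE.
congr (_ + _ - _).
- by apply: eq_bigr => j _; rewrite !mxE.
by apply: eq_bigr => j _; rewrite !mxE.
Qed.

Theorem theorem3 (R : realFieldType) (n : nat) (C : 'M[R]_n)
  (hn : (3 <= n)%N) (hds : doubly_stochastic C) (hirr : irreducible_mx C)
  (hdiag : zero_diag C) :
  forall x : 'cV[R]_n, in_simplex x ->
    (mDF_map C x = x <->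
       (exists i : 'I_n, x = basis_vec R i) \/ x = const_mx (n%:R^-1)).
Proof.
move: hds => [hnn [hrow hcol]] x [hx0 hx1]; split.
- move=> hF.
  have hx1' : forall k, x k 0 <= 1.
    move=> k; rewrite -hx1 (bigD1 k) //= lerDl.
    by apply: sumr_ge0 => j _.
  pose y k := x k 0 - x k 0 * x k 0.
  have hy0 : forall k, 0 <= y k.
    move=> k; rewrite /y subr_ge0 ler_piMr //.
  have hyF : forall k, y k = \sum_j C j k * y j.
    move=> k; have : mDF_map C x k 0 = x k 0 by rewrite hF.
    rewrite mDF_E => E.
    rewrite /y; under eq_bigr do rewrite mulrBr.
    rewrite sumrB; lra.
  have i0 : 'I_n by exists 0%N; lia.
  have [m hm] := @exmax _ _ i0 y.
  have step : forall a b, y b = y m -> C a b != 0 -> y a = y m.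
    move=> a b hb hab.
    have S0 : \sum_j C j b * (y m - y j) = 0.
      under eq_bigr do rewrite mulrBr.
      by rewrite sumrB -big_distrl /= hcol mul1r -hyF hb subrr.
    have H0 : forall j, true -> 0 <= C j b * (y m - y j).
      by move=> j _; rewrite mulr_ge0 // subr_ge0.
    have := @psumr_eq0P _ _ _ _ H0 S0 a isT.
    move=> /eqP; rewrite mulf_eq0 (negbTE hab) /=.
    by rewrite subr_eq0 => /eqP ->.
  have hyc : forall j, y j = y m.
    move=> j; have /connectP [p hp hl] := hirr j m.
    elim: p j hp hl => [|b p IH] j /=; first by move=> _ ->.
    move=> /andP [hjb hp] hl.
    by apply: (step j b (IH b hp hl)).
  case: (eqVneq (y m) 0) => hc.
  + left.
    have [i hi] : exists i, x i 0 != 0.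
      apply/existsP; apply: contraT; rewrite negb_exists => /forallP H.
      move: hx1; rewrite big1 => [|k _]; last by apply/eqP; rewrite -[_ == _]negbK H.
      by move/eqP; rewrite eq_sym oner_eq0.
    have hi1 : x i 0 = 1.
      have := hyc i; rewrite hc /y => /eqP.
      rewrite -{1}[x i 0]mulr1 -mulrBr mulf_eq0 (negbTE hi) /= subr_eq0.
      by move/eqP.
    have hrest : \sum_(k | k != i) x k 0 = 0.
      by move: hx1; rewrite (bigD1 i) //= hi1; lra.
    exists i; apply/matrixP => k j; rewrite (ord1 j) !mxE /=.
    case: (eqVneq k i) => [->|hk] /=; first by rewrite hi1.
    by apply: (psumr_eq0P _ hrest) => // l _; apply: hx0.
  + right.
    have hpos : forall k, x k 0 != 0.
      move=> k; apply: contra hc => /eqP h0; rewrite -(hyc k) /y h0; apply/eqP.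
      by rewrite mulr0 subrr.
    have heq : forall k l, x k 0 = x l 0.
      move=> k l.
      have E : (x k 0 - x l 0) * (1 - x k 0 - x l 0) = 0.
        have := hyc k; have := hyc l; rewrite /y => h1 h2.
        have : x k 0 - x k 0 * x k 0 = x l 0 - x l 0 * x l 0 by rewrite h1 h2.
        move=> h; lra.
      move/eqP: E; rewrite mulf_eq0 => /orP [/eqP|/eqP h]; first by move/eqP; rewrite subr_eq0 => /eqP.
      case: (eqVneq k l) => [->//|hkl].
      have : (0 < #|~: [set k; l]|)%N.
        have := cardsC [set k; l]; rewrite cards2 card_ord hkl /=; lia.
      case/card_gt0P => r; rewrite !inE negb_or => /andP [hrk hrl].
      exfalso; move/eqP: (hpos r); apply.
      move: hx1; rewrite (bigD1 k) //= (bigD1 l) /=; last by rewrite eq_sym.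
      move=> hs.
      have h0 : \sum_(i | (i != k) && (i != l)) x i 0 = 0 by lra.
      apply: (psumr_eq0P _ h0); last by rewrite hrk hrl.
      by move=> *; apply: hx0.
    have hn0 : (n%:R : R) != 0 by rewrite pnatr_eq0; lia.
    have ha : x i0 0 * n%:R = 1.
      rewrite -[RHS]hx1 (eq_bigr (fun _ => x i0 0)) => [|k _]; last by rewrite (heq k i0).
      by rewrite sumr_const card_ord mulr_natr.
    apply/matrixP => k j; rewrite (ord1 j) !mxE (heq k i0).
    by rewrite -[x i0 0](mulfK hn0) ha mul1r.
- have fixp : forall x : 'cV[R]_n, (forall j, x j 0 * x j 0 = x j 0) -> mDF_map C x = x.
    move=> z hz; apply/matrixP => k j; rewrite (ord1 j) mDF_E.
    rewrite [X in _ - X](eq_bigr (fun j => C j k * z j 0)) => [|i _]; last by rewrite hz.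
    have := hz k; lra.
  case=> [[i ->]|->].
  + apply: fixp => j; rewrite /basis_vec !mxE; by case: (j == i); rewrite /= ?mulr1 ?mulr0.
  + apply/matrixP => k j; rewrite (ord1 j) mDF_E !mxE.
    under eq_bigr do rewrite mxE.
    under [X in _ - X]eq_bigr do rewrite mxE.
    by rewrite -!big_distrl /= hcol !mul1r addrK.
Qed.
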